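(* Fix an integer $K\ge 1$ and $r\in(0,1/2)$. For the synchronous space-time-coded decode-and-forward relay network with $K$ relays described in the context, the end-to-end outage probability satisfies $$d_{stc}(r):=\lim_{\mathrm{SNR}\to\infty}-\frac{\log \Pr\left[I_{stc}<R(\mathrm{SNR})\right]}{\log \mathrm{SNR}}=(K+1)(1-2r).$$ In other words, the lower bound $(K+1)(1-2r)\le d_{stc}(r)$ is tight.
   Context: Network: a source $N_S$, $K$ relays $N_{R_1},\dots,N_{R_K}$ and a destination $N_D$. For each transmitter/receiver pair $(i,j)$ with $i\in\{S,R_1,\dots,R_K\}$ and $j\in\{R_1,\dots,R_K,D\}$, $i\neq j$, the channel gain $\alpha_{i,j}$ is a zero-mean circularly symmetric complex Gaussian random variable with variance $\sigma^2_{i,j}>0$. All gains are mutually independent, so $|\alpha_{i,j}|^2$ is exponentially distributed with parameter $\lambda_{i,j}=1/\sigma^2_{i,j}$. For $\mathrm{SNR}>0$ set $\rho_0=\frac{2}{K+1}\mathrm{SNR}$. The target rate is $R=R(\mathrm{SNR})=r\log(1+\mathrm{SNR}\,\sigma^2_{S,D})$, where $r$ is the multiplexing gain. All logarithms are taken in one fixed base. Transmission has two phases. - Phase 1: the source broadcasts. Relay $R_k$ decodes successfully iff $I_{S,R_k}:=\frac12\log(1+\rho_0|\alpha_{S,R_k}|^2)\ge R$. The random decoding set $\mathcal D(s)$ is the set of successful relays. - Phase 2: the relays in $\mathcal D(s)$ transmit, jointly encoding with i.i.d. complex Gaussian codebooks that are independent of the source codebook and perfectly symbol-synchronized. Conditioned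 on $\mathcal D(s)$, the end-to-end mutual information is $$I_{stc}=\frac12\log\left(1+\rho_0|\alpha_{S,D}|^2\right)+\frac12\log\left(1+\rho_0\sum_{R_k\in\mathcal D(s)}|\alpha_{R_k,D}|^2\right),$$ where an empty sum equals $0$. The probability $\Pr[I_{stc}<R]$ averages over the gains, including the randomness of $\mathcal D(s)$. *)

(* Defs.v *)
From HB Require Import structures.
From mathcomp Require Import all_boot all_order all_algebra.
From mathcomp Require Import all_classical all_reals all_analysis.
Set Implicit Arguments. Unset Strict Implicit. Unset Printing Implicit Defensive.
Import Order.TTheory GRing.Theory Num.Theory.
Import numFieldNormedType.Exports.
Local Open Scope classical_set_scope.
Local Open Scope ring_scope.

(* Nodes of the network: 'I_(K.+2); node 0 = source N_S, node K+1 = N_D,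
   node k (1 <= k <= K) = relay N_{R_k}. *)
Definition src {K : nat} : 'I_(K.+2) := ord0.
Definition dst {K : nat} : 'I_(K.+2) := ord_max.
Definition relay {K : nat} (k : 'I_K) : 'I_(K.+2) := inord k.+1.

Definition link {K : nat} (p : 'I_(K.+2) * 'I_(K.+2)) : bool :=
  [&& p.1 != dst, p.2 != src & p.1 != p.2].

Definition mutually_independent {d} {T : measurableType d} {R : realType}
  (P : probability T R) {I : finType} (A : pred I) (X : I -> T -> R) : Prop :=
  forall B : I -> set R, (forall i, A i -> measurable (B i)) ->
    P [set w | forall i, A i -> B i (X i w)] =
    (\prod_(i | A i) P (X i @^-1` B i))%E.

Definition exponential_rv {d} {T : measurableType d} {R : realType}
  (P : probability T R) (X : T -> R) (lam : R) : Prop :=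
  forall x : R, P [set w | X w <= x] =
    (if x < 0 then 0 else 1 - expR (- (lam * x)))%:E.

Definition rho0 {R : realType} (K : nat) (snr : R) : R := 2 / (K.+1)%:R * snr.

Definition rate {R : realType} (r sSD snr : R) : R := r * ln (1 + snr * sSD).

Section Network.
Context {d} {T : measurableType d} {R : realType} {K : nat}.
Variable g : 'I_(K.+2) -> 'I_(K.+2) -> T -> R.  (* g i j w = |alpha_{i,j}|^2 *)
Variables (sigma2 : 'I_(K.+2) -> 'I_(K.+2) -> R) (r : R).

Definition decodes (snr : R) (w : T) (k : 'I_K) : bool :=
  (1/2) * ln (1 + rho0 K snr * g src (relay k) w) >= rate r (sigma2 src dst) snr.

Definition I_stc (snr : R) (w : T) : R :=
  (1/2) * ln (1 + rho0 K snr * g src dst w) +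
  (1/2) * ln (1 + rho0 K snr * \sum_(k < K | decodes snr w k) g (relay k) dst w).

Definition outage_event (snr : R) : set T :=
  [set w | I_stc snr w < rate r (sigma2 src dst) snr].
End Network.

(* Main.v *)
Require Import Defs.
From HB Require Import structures.
From mathcomp Require Import all_boot all_order all_algebra.
From mathcomp Require Import all_classical all_reals all_analysis.
From mathcomp Require Import ring lra.
Import Order.TTheory GRing.Theory Num.Theory.
Import numFieldNormedType.Exports.
Local Open Scope classical_set_scope.
Local Open Scope ring_scope.


Lemma relay_val (K : nat) (k : 'I_K) : val (relay k) = k.+1.
Proof. by apply: inordK; rewrite ltnS ltnW // ltnS ltn_ord. Qed.

Lemma src_val (K : nat) : val (@src K) = 0%N.
Proof. by []. Qed.

Lemma dst_val (K : nat) : val (@dst K) = K.+1.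
Proof. by []. Qed.

Lemma relay_neq_dst (K : nat) (k : 'I_K) : relay k != dst.
Proof.
apply/eqP => /(congr1 val); rewrite relay_val dst_val => -[] hk.
by have := ltn_ord k; rewrite hk ltnn.
Qed.

Lemma relay_neq_src (K : nat) (k : 'I_K) : relay k != src.
Proof. by apply/eqP => /(congr1 val); rewrite relay_val src_val. Qed.

Lemma src_neq_dst (K : nat) : @src K != dst.
Proof. by apply/eqP => /(congr1 val); rewrite src_val dst_val. Qed.

Lemma relay_inj {K : nat} : injective (@relay K).
Proof.
move=> k1 k2 /(congr1 val); rewrite !relay_val => -[] h; exact: val_inj.
Qed.

Definition phi {K : nat} (D : {ffun 'I_K -> bool}) (o : option 'I_K) :
  'I_(K.+2) * 'I_(K.+2) :=
  match o with
  | None => (src, dst)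
  | Some k => if D k then (relay k, dst) else (src, relay k)
  end.

Lemma phi_link {K : nat} (D : {ffun 'I_K -> bool}) o : link (phi D o).
Proof.
rewrite /link; case: o => [k|] /=; last by [].
have hk := ltn_ord k.
case: (D k) => /=; rewrite ?relay_neq_dst ?relay_neq_src //.
by rewrite eq_sym relay_neq_src.
Qed.

Lemma phi_inj {K : nat} (D : {ffun 'I_K -> bool}) : injective (phi D).
Proof.
have h1 := @relay_neq_dst K; have h2 := @relay_neq_src K; have h3 := @src_neq_dst K.
move=> [k1|] [k2|] //= E; have e1 := congr1 fst E; have e2 := congr1 snd E;
  move: E e1 e2; rewrite /=.
- case: (D k1); case: (D k2) => _ /= e1 e2.
  + by move/relay_inj: e1 => ->.
  + by move: (h2 k1); rewrite e1 eqxx.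
  + by move: (h2 k2); rewrite -e1 eqxx.
  + by move/relay_inj: e2 => ->.
- case: (D k1) => _ /= e1 e2.
  + by move: (h2 k1); rewrite e1 eqxx.
  + by move: (h1 k1); rewrite e2 eqxx.
- case: (D k2) => _ /= e1 e2.
  + by move: (h2 k2); rewrite -e1 eqxx.
  + by move: (h1 k2); rewrite -e2 eqxx.
Qed.

Definition Sel {K : nat} (D : {ffun 'I_K -> bool}) : {set 'I_(K.+2) * 'I_(K.+2)} :=
  [set phi D o | o in [set: option 'I_K]].

Definition Ev {T : Type} {R : realType} {K : nat}
  (g : 'I_(K.+2) -> 'I_(K.+2) -> T -> R) (D : {ffun 'I_K -> bool}) (t : R) : set T :=
  [set w | forall p, link p ->
     (if p \in Sel D then [set x : R | x <= t] else setT) (g p.1 p.2 w)].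

Lemma measurable_le (R : realType) (t : R) : measurable [set x : R | x <= t].
Proof. rewrite -set_itvNyc; exact: measurable_itv. Qed.

Lemma Sel_link {K : nat} {D : {ffun 'I_K -> bool}} {p} : p \in Sel D -> link p.
Proof. by case/imsetP => o _ ->; exact: phi_link. Qed.

Lemma Ev_prob (d : measure_display) (T : measurableType d) (R : realType)
  (P : probability T R) (K : nat) (g : 'I_(K.+2) -> 'I_(K.+2) -> T -> R)
  (sigma2 : 'I_(K.+2) -> 'I_(K.+2) -> R) (D : {ffun 'I_K -> bool}) (t : R) :
  0 <= t ->
  (forall i j, link (i, j) -> exponential_rv P (g i j) (sigma2 i j)^-1) ->
  mutually_independent P link (fun p => g p.1 p.2) ->
  P (Ev g D t) = (\prod_(o : option 'I_K)
     (1 - expR (- ((sigma2 (phi D o).1 (phi D o).2)^-1 * t))))%:E.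
Proof.
move=> t0 hexp hind.
rewrite /Ev (hind (fun p => if p \in Sel D then [set x : R | x <= t] else setT)); last first.
  by move=> p _; case: ifP => _; [exact: measurable_le | exact: measurableT].
under eq_bigr => p lp.
  rewrite (_ : P _ = (if p \in Sel D then
     1 - expR (- ((sigma2 p.1 p.2)^-1 * t)) else 1)%:E); last first.
    case: ifP => _; last by rewrite preimage_setT probability_setT.
    move: lp; case: p => i j /= lp.
    by rewrite (hexp i j lp) ltNge t0.
  over.
rewrite prodEFin; congr EFin.
rewrite big_mkcond /= (eq_bigr (fun p => if p \in Sel D then
     1 - expR (- ((sigma2 p.1 p.2)^-1 * t)) else 1)); last first.
  move=> p _; case: (boolP (p \in Sel D)) => [pin|]; first by rewrite (Sel_link pin).
  by case: (link p).
rewrite -big_mkcond /= big_imset /=; last by move=> x y _ _; exact: phi_inj.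
by apply: eq_bigl => o; rewrite in_setT.
Qed.

Lemma in_bigsetI (T : Type) (I : eqType) (s : seq I) (Q : pred I) (F : I -> set T) w :
  (\big[setI/setT]_(i <- s | Q i) F i) w <-> (forall i, i \in s -> Q i -> F i w).
Proof.
elim: s => [|i s IH]; first by rewrite big_nil; split.
rewrite big_cons; split.
  case: ifP => Qi.
    move=> [h1 /IH h2] j; rewrite in_cons => /orP[/eqP->//|js]; exact: h2.
  move=> /IH h2 j; rewrite in_cons => /orP[/eqP->|js]; [by rewrite Qi|exact: h2].
move=> h; case: ifP => Qi.
  split; first by apply: h => //; rewrite mem_head.
  by apply/IH => j js; apply: h; rewrite in_cons js orbT.
by apply/IH => j js; apply: h; rewrite in_cons js orbT.
Qed.

Lemma Ev_measurable (d : measure_display) (T : measurableType d) (R : realType)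
  (K : nat) (g : 'I_(K.+2) -> 'I_(K.+2) -> T -> R)
  (D : {ffun 'I_K -> bool}) (t : R) :
  (forall i j, link (i, j) -> measurable_fun setT (g i j)) ->
  measurable (Ev g D t).
Proof.
move=> hm.
rewrite (_ : Ev g D t = \big[setI/setT]_(p <- index_enum _ | link p)
   (g p.1 p.2 @^-1` (if p \in Sel D then [set x : R | x <= t] else setT))).
  apply: bigsetI_measurable => -[i j] lp.
  rewrite -[X in measurable X]setTI; apply: (hm i j lp) => //.
  by case: ifP => _; [exact: measurable_le | exact: measurableT].
apply/seteqP; split => w /=.
  move=> h; apply/in_bigsetI => p _ lp; exact: h.
by move/in_bigsetI => h p lp; apply: h => //; rewrite mem_index_enum.
Qed.

Lemma link_sd (K : nat) : link (@src K, @dst K).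
Proof.
by [].
Qed.

Lemma link_sr (K : nat) (k : 'I_K) : link (src, relay k).
Proof.
apply/and3P; split => /=; [exact: src_neq_dst|exact: relay_neq_src| rewrite eq_sym; exact: relay_neq_src].
Qed.

Lemma link_rd (K : nat) (k : 'I_K) : link (relay k, dst).
Proof.
by apply/and3P; split => //=; exact: relay_neq_dst.
Qed.

Lemma mf_aff (d : measure_display) (T : measurableType d) (R : realType)
  (a b : R) (h : T -> R) :
  measurable_fun setT h -> measurable_fun setT (fun w => a * ln (1 + b * h w)).
Proof.
move=> mh.
have mr : measurable_fun setT (fun x : R => a * ln (1 + b * x)).
  apply: measurable_realfun.measurable_funM => //.
  apply: measurableT_comp; first exact: measurable_realfun.measurable_ln.
  apply: measurable_realfun.measurable_funD => //.
exact: (measurableT_comp mr mh).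
Qed.

Lemma outage_measurable (d : measure_display) (T : measurableType d) (R : realType)
  (K : nat) (r : R) (g : 'I_(K.+2) -> 'I_(K.+2) -> T -> R)
  (sigma2 : 'I_(K.+2) -> 'I_(K.+2) -> R) (snr : R) :
  (forall i j, link (i, j) -> measurable_fun setT (g i j)) ->
  measurable (outage_event g sigma2 r snr).
Proof.
move=> hm.
have lsd := @link_sd K.
have lsr := @link_sr K.
have lrd := @link_rd K.
have mI : measurable_fun setT (I_stc g sigma2 r snr).
  rewrite /I_stc; apply: measurable_realfun.measurable_funD; first exact/mf_aff/hm.
  apply: mf_aff.
  rewrite (_ : (fun w => \sum_(k < K | decodes g sigma2 r snr w k) g (relay k) dst w) =
    (fun w => \sum_(k <- index_enum 'I_K) (if decodes g sigma2 r snr w k then g (relay k) dst w else 0)));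
    last by apply: funext => w; rewrite big_mkcond.
  apply: measurable_sum => k.
  apply: measurable_fun_ifT => //; last exact: hm.
  rewrite /decodes; apply: measurable_realfun.measurable_fun_ler => //.
  exact/mf_aff/hm.
rewrite (_ : outage_event g sigma2 r snr =
  (I_stc g sigma2 r snr) @^-1` `]-oo, rate r (sigma2 src dst) snr[); last by rewrite set_itvNyo.
rewrite -[X in measurable X]setTI; exact: mI.
Qed.


Lemma ln_lt_exp (R : realType) (y c : R) : 0 < c -> y < expR c -> ln y < c.
Proof.
move=> c0 yc; have [y0|y0] := leP y 0; first by rewrite ln0.
by rewrite -ltr_expR lnK // posrE.
Qed.

Lemma lt_exp_ln (R : realType) (y c : R) : 0 < y -> ln y < c -> y < expR c.
Proof. by move=> y0 yc; rewrite -(lnK (y0 : y \is Num.pos)) ltr_expR. Qed.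

Lemma one_m_expN_le (R : realType) (y : R) : 1 - expR (- y) <= y.
Proof. have := expR_ge1Dx (- y); lra. Qed.

Lemma one_m_expN_ge0 (R : realType) (y : R) : 0 <= y -> 0 <= 1 - expR (- y).
Proof.
move=> y0; rewrite subr_ge0 -expR0 ler_expR; lra.
Qed.

Lemma one_m_expN_ge (R : realType) (y : R) : 0 <= y <= 1 -> y / 2 <= 1 - expR (- y).
Proof.
move=> /andP[y0 y1]; rewrite expRN.
have h := expR_ge1Dx y.
have e0 : 0 < expR y := expR_gt0 y.
have : (expR y)^-1 <= (1 + y)^-1.
  by rewrite lef_pV2 ?posrE //; lra.
suff : (1 + y)^-1 <= 1 - y / 2 by lra.
rewrite -[X in X <= _]mul1r ler_pdivrMr; last lra.
nra.
Qed.


Lemma union_bound (d : measure_display) (T : measurableType d) (R : realType)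
  (P : probability T R) (I : Type) (s : seq I) (Q : pred I) (A : I -> set T) :
  (forall i, Q i -> measurable (A i)) ->
  (P (\big[setU/set0]_(i <- s | Q i) A i) <= \sum_(i <- s | Q i) P (A i))%E.
Proof.
move=> mA; elim: s => [|i s IH]; first by rewrite !big_nil measure0.
rewrite !big_cons; case: ifP => Qi //.
apply: le_trans (measureU2 _ _ _) _ => //; first exact: mA.
  apply: bigsetU_measurable => j Qj; exact: mA.
exact: leeD2l.
Qed.
Lemma key_lt (R : realType) (r L rho x : R) : 0 < r -> 0 < L -> 0 < rho ->
  x <= (expR (2 * r * L) - 1) / rho / 2 -> (1/2) * ln (1 + rho * x) < r * L.
Proof.
move=> r0 L0 rho0 hx.
have M1 : 1 < expR (2 * r * L).
  by rewrite -[X in X < _]expR0 ltr_expR; apply: mulr_gt0 => //; apply: mulr_gt0.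
suff : ln (1 + rho * x) < 2 * r * L by lra.
apply: ln_lt_exp; first nra.
have : rho * x <= (expR (2 * r * L) - 1) / 2.
  by rewrite mulrC -ler_pdivlMr // mulrAC.
lra.
Qed.

Lemma key_le (R : realType) (r L rho x : R) : 0 < rho -> 0 < 1 + rho * x ->
  (1/2) * ln (1 + rho * x) < r * L -> x <= (expR (2 * r * L) - 1) / rho.
Proof.
move=> rho0 p0 h.
have : 1 + rho * x < expR (2 * r * L) by apply: lt_exp_ln => //; lra.
move=> h2; rewrite ler_pdivlMr //; lra.
Qed.

Lemma rho0_gt0 (R : realType) (K : nat) (snr : R) : 0 < snr -> 0 < rho0 K snr.
Proof. by move=> s0; rewrite /rho0 mulr_gt0 // divr_gt0 // ltr0Sn. Qed.


Lemma in_Ev {T : Type} {R : realType} {K : nat}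
  {g : 'I_(K.+2) -> 'I_(K.+2) -> T -> R} {D : {ffun 'I_K -> bool}} {t : R} {w} :
  Ev g D t w -> forall o, g (phi D o).1 (phi D o).2 w <= t.
Proof.
move=> hw o; have := hw (phi D o) (phi_link D o).
by rewrite (_ : phi D o \in Sel D) //; apply: imset_f; rewrite in_setT.
Qed.

Lemma lower_incl (d : measure_display) (T : measurableType d) (R : realType)
  (K : nat) (r : R) (g : 'I_(K.+2) -> 'I_(K.+2) -> T -> R)
  (sigma2 : 'I_(K.+2) -> 'I_(K.+2) -> R) (snr : R) :
  0 < r -> 0 < sigma2 src dst -> 0 < snr ->
  Ev g [ffun _ => false]
    ((expR (2 * r * ln (1 + snr * sigma2 src dst)) - 1) / rho0 K snr / 2)
  `<=` outage_event g sigma2 r snr.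
Proof.
move=> r0 s0 snr0 w hw.
have L0 : 0 < ln (1 + snr * sigma2 src dst).
  by apply: ln_gt0; rewrite ltrDl mulr_gt0.
have rh := @rho0_gt0 R K snr snr0.
have hs := in_Ev hw.
have nd : forall k, decodes g sigma2 r snr w k = false.
  move=> k; rewrite /decodes /rate; apply/negbTE; rewrite -ltNge.
  apply: key_lt => //; have := hs (Some k); by rewrite /= ffunE.
rewrite /outage_event /I_stc /=.
have -> : \sum_(k < K | decodes g sigma2 r snr w k) g (relay k) dst w = 0.
  by apply: big_pred0 => k; rewrite nd.
rewrite mulr0 addr0 ln1 mulr0 addr0 /rate.
apply: key_lt => //; exact: (hs None).
Qed.

Lemma in_bigsetU (T : Type) (I : eqType) (s : seq I) (Q : pred I) (F : I -> set T) w :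
  (\big[setU/set0]_(i <- s | Q i) F i) w <-> (exists i, [/\ i \in s, Q i & F i w]).
Proof.
elim: s => [|i s IH]; first by rewrite big_nil; split => // -[i []].
rewrite big_cons; split.
  case: ifP => Qi.
    case=> [h|/IH [j [js Qj Fj]]]; first by exists i; rewrite mem_head.
    by exists j; rewrite in_cons js orbT.
  move=> /IH [j [js Qj Fj]]; by exists j; rewrite in_cons js orbT.
move=> [j [+ Qj Fj]]; rewrite in_cons => /orP[/eqP ji|js].
  by subst j; rewrite Qj; left.
have h : (\big[setU/set0]_(i0 <- s | Q i0) F i0) w by apply/IH; exists j.
by case: ifP => _ //; right.
Qed.

Lemma upper_incl (d : measure_display) (T : measurableType d) (R : realType)
  (K : nat) (r : R) (g : 'I_(K.+2) -> 'I_(K.+2) -> T -> R)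
  (sigma2 : 'I_(K.+2) -> 'I_(K.+2) -> R) (snr : R) :
  0 < r -> 0 < snr ->
  outage_event g sigma2 r snr `<=`
  (\big[setU/set0]_(D : {ffun 'I_K -> bool})
     Ev g D ((expR (2 * r * ln (1 + snr * sigma2 src dst)) - 1) / rho0 K snr)) `|`
  (\big[setU/set0]_(p | link p) [set w | g p.1 p.2 w <= 0]).
Proof.
move=> r0 snr0 w hw; rewrite /setU /=.
have rh := @rho0_gt0 R K snr snr0.
case: (pselect (exists p, link p /\ g p.1 p.2 w <= 0)) => [[p [lp gp]]|npos].
  by right; apply/in_bigsetU; exists p; split => //; rewrite mem_index_enum.
have gpos : forall p, link p -> 0 < g p.1 p.2 w.
  move=> p lp; rewrite ltNge; apply/negP => h; apply: npos; by exists p.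
left; apply/in_bigsetU; exists [ffun k => decodes g sigma2 r snr w k].
split => //; first by rewrite mem_index_enum.
move: hw; rewrite /outage_event /I_stc /= => hw.
set S := \sum_(k < K | decodes g sigma2 r snr w k) g (relay k) dst w in hw.
have S0 : 0 <= S.
  apply: sumr_ge0 => k _; exact: ltW (gpos _ (link_rd _ k)).
have lnS0 : 0 <= ln (1 + rho0 K snr * S) by apply: ln_ge0; rewrite lerDl mulr_ge0 // ltW.
have lna0 : 0 <= ln (1 + rho0 K snr * g src dst w).
  by apply: ln_ge0; rewrite lerDl mulr_ge0 // ltW // (gpos _ (link_sd K)).
move: hw; rewrite /rate => hw.
move=> p lp; case: ifP => hin //; case/imsetP: hin => o _ -> /=.
case: o => [k|] /=; last first.
  apply: key_le => //; last lra.
  by rewrite addr_gt0 // mulr_gt0 // (gpos _ (link_sd K)).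
rewrite ffunE; case: ifP => dk /=.
  have ck0 := gpos _ (link_rd _ k).
  have ckS : g (relay k) dst w <= S.
    rewrite /S (bigD1 k) //= lerDl; apply: sumr_ge0 => j /andP[_ _].
    exact: ltW (gpos _ (link_rd _ j)).
  have : ln (1 + rho0 K snr * g (relay k) dst w) <= ln (1 + rho0 K snr * S).
    rewrite ler_ln ?posrE; first by rewrite lerD2l ler_pM2l.
      by rewrite addr_gt0 // mulr_gt0.
    by rewrite addr_gt0 // ?mulr_gt0 // (lt_le_trans ck0 ckS).
  move=> hle; apply: key_le => //; last lra.
  by rewrite addr_gt0 // mulr_gt0.
move: dk; rewrite /decodes /rate => /negbT; rewrite -ltNge => dk.
apply: key_le => //.
by rewrite addr_gt0 // mulr_gt0 // (gpos _ (link_sr _ k)).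
Qed.


Lemma lnM2 {R : realType} {x y : R} : 0 < x -> 0 < y -> ln (x * y) = ln x + ln y.
Proof. by move=> hx hy; apply: lnM. Qed.

Lemma lndiv2 {R : realType} {x y : R} : 0 < x -> 0 < y -> ln (x / y) = ln x - ln y.
Proof. by move=> hx hy; apply: ln_div. Qed.

Definition tthr {R : realType} (K : nat) (r s snr : R) : R :=
  (expR (2 * r * ln (1 + snr * s)) - 1) / rho0 K snr.

Lemma asympt (R : realType) (K : nat) (r s C N2 Lam : R) (p : R -> R) :
  0 < r -> r < 1 / 2 -> 0 < s -> 0 < C -> 1 <= N2 -> 0 < Lam ->
  (forall snr, 1 < snr -> Lam * tthr K r s snr <= 1 ->
     C * (tthr K r s snr / 2) ^+ K.+1 <= p snr <= N2 * (Lam * tthr K r s snr) ^+ K.+1) ->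
  (fun snr => - ln (p snr) / ln snr) @ +oo --> ((K.+1)%:R * (1 - 2 * r) : R).
Proof.
move=> r0 r12 s0 C0 N21 L0 hb.
apply/cvgrPdist_le => e e0.
set k1 : R := (K.+1)%:R.
have k10 : 0 < k1 by rewrite ltr0Sn.
set ls := ln s; set ls1 := ln (s + 1); set l2 := ln (2 : R).
set lc := ln (2 / k1).
set B := `|ln C + k1 * (2 * r * ls - 2 * l2 - lc)| +
         `|ln N2 + k1 * ln Lam + k1 * (2 * r * ls1 - lc)|.
set A1 := l2 / (2 * r) - ls.
set A2 := (ln Lam + 2 * r * ls1 - lc) / (1 - 2 * r).
set U := `|A1| + `|A2| + B / e + 1.
near=> snr.
have hU : expR U < snr by near: snr; apply: nbhs_pinfty_gt; rewrite num_real.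
have B0 : 0 <= B by rewrite /B addr_ge0.
have Be0 : 0 <= B / e by rewrite divr_ge0 // ltW.
have U0 : 0 < U by rewrite /U; have := normr_ge0 A1; have := normr_ge0 A2; lra.
have snr1 : 1 < snr by apply: lt_trans hU; rewrite -expR0 ltr_expR.
have snr0 : 0 < snr by lra.
set u := ln snr.
have uU : U < u by rewrite /u -ltr_expR lnK // posrE.
have u0 : 0 < u by lra.
set L := ln (1 + snr * s).
have hs1 : 0 < s + 1 by lra.
have hsn : 0 < snr * s by rewrite mulr_gt0.
have hL1 : u + ls <= L.
  rewrite /u /ls -(lnM2 snr0 s0).
  rewrite ler_ln ?posrE ?addr_gt0 //; lra.
have hL2 : L <= u + ls1.
  rewrite /u /ls1 -(lnM2 snr0 hs1).
  rewrite ler_ln ?posrE ?mulr_gt0 ?addr_gt0 //; nra.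
set M := expR (2 * r * L).
have uU' : `|A1| + `|A2| + B / e + 1 < u by [].
have rL1 : r * u + r * ls <= r * L by rewrite -mulrDr ler_pM2l.
have rL2 : r * L <= r * u + r * ls1 by rewrite -mulrDr ler_pM2l.
have hA1 : A1 < u by have := ler_norm A1; have := normr_ge0 A2; lra.
have l2le : l2 <= 2 * r * L.
  have : l2 / (2 * r) <= L by rewrite /A1 in hA1; lra.
  by rewrite ler_pdivrMr ?mulr_gt0 // => h; lra.
have two0 : (0 : R) < 2 by [].
have M2 : 2 <= M by rewrite /M -[X in X <= _](lnK (two0 : (2:R) \is Num.pos)) ler_expR.
have M1p : 0 < M - 1 by lra.
have lnM1a : ln (M - 1) <= 2 * r * L.
  rewrite -[X in _ <= X]expRK -/M ler_ln ?posrE //; [lra | lra].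
have lnM1b : 2 * r * L - l2 <= ln (M - 1).
  have : ln (M / 2) = 2 * r * L - l2 by rewrite ln_div ?posrE // ?expRK //; lra.
  move=> <-; rewrite ler_ln ?posrE //. all: try lra.
set t := tthr K r s snr.
have rho : rho0 K snr = 2 / k1 * snr by [].
have tE : t = (M - 1) / (2 / k1 * snr) by [].
have k2 : 0 < 2 / k1 by rewrite divr_gt0.
have tpos : 0 < t by rewrite tE divr_gt0 // mulr_gt0.
have hrho : ln (rho0 K snr) = lc + u.
  rewrite /rho0 lnM2 //; exact: divr_gt0.
have lnt : ln t = ln (M - 1) - lc - u.
  rewrite /t /tthr lndiv2 //; last exact: rho0_gt0.
  rewrite hrho; lra.
have hlt_lo : 2 * (r * u) + 2 * (r * ls) - l2 - lc - u <= ln t by lra.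
have hlt_hi : ln t <= 2 * (r * u) + 2 * (r * ls1) - lc - u by lra.
have hA2 : A2 < u by have := ler_norm A2; have := normr_ge0 A1; lra.
have hA2' : ln Lam + 2 * r * ls1 - lc < (1 - 2 * r) * u.
  have h12 : 0 < 1 - 2 * r by lra.
  by move: hA2; rewrite /A2 ltr_pdivrMr // [u * _]mulrC.
have LamT : Lam * t <= 1.
  apply/ltW; rewrite -expR0; apply: lt_exp_ln; first by rewrite mulr_gt0.
  by rewrite lnM ?posrE //; lra.
have /andP[lo hi] := hb snr snr1 LamT.
have lo0 : 0 < C * (t / 2) ^+ K.+1 by rewrite mulr_gt0 // exprn_gt0 // divr_gt0.
have p0 : 0 < p snr by lra.
have hlo : ln C + k1 * (ln t - l2) <= ln (p snr).
  have : ln (C * (t / 2) ^+ K.+1) <= ln (p snr) by rewrite ler_ln ?posrE.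
  have t2 : 0 < t / 2 by rewrite divr_gt0.
  rewrite (lnM2 C0 (exprn_gt0 _ t2)) (lnXn _ t2) (lndiv2 tpos two0).
  by rewrite -[_ *+ K.+1]mulr_natl.
have hhi : ln (p snr) <= ln N2 + k1 * (ln Lam + ln t).
  have hp : 0 < N2 * (Lam * t) ^+ K.+1 by lra.
  have : ln (p snr) <= ln (N2 * (Lam * t) ^+ K.+1) by rewrite ler_ln ?posrE.
  have lt0 : 0 < Lam * t by rewrite mulr_gt0.
  have N20 : 0 < N2 by lra.
  rewrite (lnM2 N20 (exprn_gt0 _ lt0)) (lnXn _ lt0) (lnM2 L0 tpos).
  by rewrite -[_ *+ K.+1]mulr_natl.
have m1 := ler_wpM2l (ltW k10) hlt_lo.
have m2 := ler_wpM2l (ltW k10) hlt_hi.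
set a1 := ln C + k1 * (2 * r * ls - 2 * l2 - lc).
set a2 := ln N2 + k1 * ln Lam + k1 * (2 * r * ls1 - lc).
have n1 : - `|a1| <= a1 <= `|a1| by rewrite -ler_norml.
have n2 : - `|a2| <= a2 <= `|a2| by rewrite -ler_norml.
move: n1 n2 => /andP[n11 n12] /andP[n21 n22].
have Beu : B < e * u.
  rewrite mulrC -ltr_pdivrMr //; have := normr_ge0 A1; have := normr_ge0 A2; lra.
rewrite (_ : k1 * (1 - 2 * r) - - ln (p snr) / u = (k1 * (1 - 2 * r) * u + ln (p snr)) / u); last first.
  by field; rewrite gt_eqF.
rewrite normrM normfV (gtr0_norm u0) ler_pdivrMr // ler_norml.
rewrite /a1 /a2 /B in n11 n12 n21 n22 Beu *.
apply/andP; split; lra.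
Unshelve. all: by end_near.
Qed.


Definition LamD {R : realType} {K : nat} (sigma2 : 'I_(K.+2) -> 'I_(K.+2) -> R) : R :=
  \sum_(p | link p) (sigma2 p.1 p.2)^-1.

Definition CD {R : realType} {K : nat} (sigma2 : 'I_(K.+2) -> 'I_(K.+2) -> R) : R :=
  \prod_(o : option 'I_K)
    ((sigma2 (phi [ffun _ => false] o).1 (phi [ffun _ => false] o).2)^-1 / 2).

Definition N2D (R : realType) (K : nat) : R := #|{ffun 'I_K -> bool}|%:R.

Lemma lam_le {R : realType} {K : nat} (sigma2 : 'I_(K.+2) -> 'I_(K.+2) -> R) :
  (forall i j, link (i, j) -> 0 < sigma2 i j) ->
  forall p, link p -> (sigma2 p.1 p.2)^-1 <= LamD sigma2.
Proof.
move=> hs p lp; rewrite /LamD (bigD1 p) //= lerDl.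
apply: sumr_ge0 => -[i j] /andP[lij _]; rewrite invr_ge0 ltW //; exact: hs.
Qed.

Lemma lam_pos {R : realType} {K : nat} (sigma2 : 'I_(K.+2) -> 'I_(K.+2) -> R) :
  (forall i j, link (i, j) -> 0 < sigma2 i j) ->
  forall p, link p -> 0 < (sigma2 p.1 p.2)^-1.
Proof. by move=> hs [i j] lp; rewrite invr_gt0; exact: hs. Qed.

Lemma prob_bounds (d : measure_display) (T : measurableType d) (R : realType)
  (P : probability T R) (K : nat) (r : R)
  (g : 'I_(K.+2) -> 'I_(K.+2) -> T -> R)
  (sigma2 : 'I_(K.+2) -> 'I_(K.+2) -> R) (snr : R) :
  0 < r -> 1 < snr ->
  (forall i j, link (i, j) -> 0 < sigma2 i j) ->
  (forall i j, link (i, j) -> measurable_fun setT (g i j)) ->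
  (forall i j, link (i, j) -> exponential_rv P (g i j) (sigma2 i j)^-1) ->
  mutually_independent P link (fun p => g p.1 p.2) ->
  LamD sigma2 * tthr K r (sigma2 src dst) snr <= 1 ->
  CD sigma2 * (tthr K r (sigma2 src dst) snr / 2) ^+ K.+1
    <= fine (P (outage_event g sigma2 r snr))
    <= N2D R K * (LamD sigma2 * tthr K r (sigma2 src dst) snr) ^+ K.+1.
Proof.
move=> r0 snr1 hs hm hexp hind hLt.
have snr0 : 0 < snr by lra.
have s0 : 0 < sigma2 src dst by apply: hs; exact: link_sd.
set t := tthr K r (sigma2 src dst) snr.
set Lam := LamD sigma2.
have rh := @rho0_gt0 R K snr snr0.
have t0 : 0 < t.
  rewrite /t /tthr divr_gt0 // subr_gt0 -[X in X < _]expR0 ltr_expR.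
  by rewrite !mulr_gt0 // ln_gt0 // ltrDl mulr_gt0.
have Mo : measurable (outage_event g sigma2 r snr) by exact: outage_measurable.
have lamle := lam_le _ hs.
have lampos := lam_pos _ hs.
have mU1 : measurable (\big[setU/set0]_(D : {ffun 'I_K -> bool}) Ev g D t).
  by apply: bigsetU_measurable => D _; exact: Ev_measurable.
have mA2 : forall p, link p -> measurable [set w | g p.1 p.2 w <= 0].
  move=> [i j] lp; have := hm i j lp measurableT _ (measurable_le R 0).
  by rewrite setTI.
have mU2 : measurable (\big[setU/set0]_(p | link p) [set w | g p.1 p.2 w <= 0]).
  by apply: bigsetU_measurable.
have up : (P (outage_event g sigma2 r snr) <=
    (\sum_(D : {ffun 'I_K -> bool}) \prod_(o : option 'I_K)
       (1 - expR (- ((sigma2 (phi D o).1 (phi D o).2)^-1 * t))))%:E)%E.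
  apply: le_trans (le_measure _ _ _ (@upper_incl _ _ _ K r g sigma2 snr r0 snr0)) _.
  - by rewrite inE.
  - by rewrite inE; apply: measurableU.
  apply: le_trans (measureU2 _ mU1 mU2) _.
  have h2 : (P (\big[setU/set0]_(p | link p) [set w | (g p.1 p.2 w <= 0)%R]) <= 0)%E.
    apply: le_trans (union_bound _ _ _ _ _ _ _ _ mA2) _.
    rewrite big1 // => -[i j] lp.
    by rewrite /= (hexp i j lp) ltxx mulr0 oppr0 expR0 subrr.
  have h1 : (P (\big[setU/set0]_(D : {ffun 'I_K -> bool}) Ev g D t) <=
    (\sum_(D : {ffun 'I_K -> bool}) \prod_(o : option 'I_K)
       (1 - expR (- ((sigma2 (phi D o).1 (phi D o).2)^-1 * t))))%:E)%E.
    apply: le_trans (union_bound _ _ _ _ _ _ _ _ (fun D _ => @Ev_measurable _ _ _ K g D t hm)) _.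
    rewrite -sumEFin; apply: lee_sum => D _.
    by rewrite (@Ev_prob _ _ _ P K g sigma2 D t (ltW t0) hexp hind).
  by rewrite -[X in (_ <= X)%E]adde0; apply: leeD.
have lo : ((\prod_(o : option 'I_K)
       (1 - expR (- ((sigma2 (phi [ffun _ => false] o).1 (phi [ffun _ => false] o).2)^-1 * (t / 2)))))%:E
     <= P (outage_event g sigma2 r snr))%E.
  rewrite -(@Ev_prob _ _ _ P K g sigma2 [ffun _ => false] (t / 2) _ hexp hind); last by rewrite divr_ge0 // ltW.
  apply: le_measure; [by rewrite inE; exact: Ev_measurable | by rewrite inE |].
  exact: lower_incl.
have hup : \sum_(D : {ffun 'I_K -> bool}) \prod_(o : option 'I_K)
       (1 - expR (- ((sigma2 (phi D o).1 (phi D o).2)^-1 * t)))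
     <= N2D R K * (Lam * t) ^+ K.+1.
  apply: le_trans (_ : \sum_(D : {ffun 'I_K -> bool}) (Lam * t) ^+ K.+1 <= _); last first.
    by rewrite sumr_const -mulr_natl.
  apply: ler_sum => D _.
  have <- : \prod_(o : option 'I_K) (Lam * t) = (Lam * t) ^+ K.+1.
    by rewrite prodr_const card_option card_ord.
  apply: ler_prod => o _; apply/andP; split.
    by apply: one_m_expN_ge0; rewrite mulr_ge0 // ltW // lampos // phi_link.
  apply: le_trans (one_m_expN_le _ _) _.
  by apply: ler_wpM2r; [exact: ltW | exact: lamle (phi_link D o)].
have hlo : CD sigma2 * (t / 2) ^+ K.+1 <= \prod_(o : option 'I_K)
       (1 - expR (- ((sigma2 (phi [ffun _ => false] o).1 (phi [ffun _ => false] o).2)^-1 * (t / 2)))).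
  rewrite /CD.
  have -> : \prod_(o : option 'I_K)
      ((sigma2 (phi [ffun _ => false] o).1 (phi [ffun _ => false] o).2)^-1 / 2) * (t / 2) ^+ K.+1
    = \prod_(o : option 'I_K)
      ((sigma2 (phi [ffun _ => false] o).1 (phi [ffun _ => false] o).2)^-1 / 2 * (t / 2)).
    by rewrite [RHS]big_split /= [X in _ = _ * X]prodr_const card_option card_ord.
  apply: ler_prod => o _.
  have lp := phi_link [ffun _ => false] o.
  have l0 := lampos _ lp; have l1 := lamle _ lp.
  set la := (sigma2 _ _)^-1 in l0 l1 *.
  apply/andP; split; first by rewrite mulr_ge0 // divr_ge0 // ltW.
  have y0 : 0 <= la * (t / 2) by rewrite mulr_ge0 // ltW // divr_gt0.
  have y1 : la * (t / 2) <= 1.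
    have l1p : la <= Lam := l1.
    have h : la * (t / 2) <= Lam * t by nra.
    exact: le_trans h hLt.
  have := one_m_expN_ge _ (la * (t / 2)) (introT andP (conj y0 y1)).
  lra.
move: up lo; case: (P (outage_event g sigma2 r snr)) => [q | | ] /=.
- rewrite !lee_fin => h1 h2; apply/andP; split; [exact: le_trans hlo h2 | exact: le_trans h1 hup].
- by rewrite leye_eq.
- by move=> _; rewrite leeNy_eq.
Qed.


Theorem theorem1 (d : measure_display) (T : measurableType d) (R : realType)
  (P : probability T R) (K : nat) (r : R)
  (g : 'I_(K.+2) -> 'I_(K.+2) -> T -> R)
  (sigma2 : 'I_(K.+2) -> 'I_(K.+2) -> R) :
  (1 <= K)%N ->
  0 < r < 1 / 2 ->
  (forall i j, link (i, j) -> 0 < sigma2 i j) ->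
  (forall i j, link (i, j) -> measurable_fun setT (g i j)) ->
  (forall i j, link (i, j) -> exponential_rv P (g i j) (sigma2 i j)^-1) ->
  mutually_independent P link (fun p => g p.1 p.2) ->
  (fun snr : R => - ln (fine (P (outage_event g sigma2 r snr))) / ln snr)
     @ +oo --> ((K.+1)%:R * (1 - 2 * r) : R).
Proof.
move=> K1 /andP[r0 r12] hs hm hexp hind.
have s0 : 0 < sigma2 src dst by apply: hs; exact: link_sd.
apply: (@asympt R K r (sigma2 src dst) (CD sigma2) (N2D R K) (LamD sigma2)
   (fun snr => fine (P (outage_event g sigma2 r snr)))) => //.
- rewrite /CD; apply: prodr_gt0 => o _; rewrite divr_gt0 //.
  exact: (lam_pos _ hs _ (phi_link _ o)).
- by rewrite /N2D ler1n card_ffun expn_gt0 card_bool.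
- apply: lt_le_trans (lam_le _ hs _ (link_sd K)); exact: (lam_pos _ hs _ (link_sd K)).
- move=> snr snr1 hLt; exact: prob_bounds.
Qed.
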